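(* Let $A$ be a complete local algebra over an algebraically closed field $k$, with maximal ideal $\mathfrak m$ such that $\mathfrak m/\mathfrak m^2$ is finite-dimensional. Let $\phi$ be an automorphism of $A$. Suppose there exists an integer $n$ such that for all $n'\ge n$, no product of $n'$ (not necessarily distinct) eigenvalues of $\phi$ on $\mathfrak m/\mathfrak m^2$ is an eigenvalue of $\phi$ on $\mathfrak m/\mathfrak m^2$. Then there exist a $k$-vector space $V$ with an automorphism $\phi_V$ and a map $V\to\mathfrak m$ intertwining $\phi_V$ and $\phi$, such that the composite $V\to\mathfrak m\to\mathfrak m/\mathfrak m^2$ is surjective. *)

(* Defs.v *)
From HB Require Import structures.
From mathcomp Require Import all_boot all_order all_algebra.
Set Implicit Arguments. Unset Strict Implicit. Unset Printing Implicit Defensive.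
Import Order.TTheory GRing.Theory Num.Theory.
Local Open Scope ring_scope.

Section LocalAlg.
Variables (k : fieldType) (A : comAlgType k).

Definition is_unit (x : A) : Prop := exists y : A, x * y = 1.

(* the maximal ideal (when A is local): the set of non-units *)
Definition maxideal (x : A) : Prop := ~ is_unit x.

(* A is local: its non-units form an ideal (closed under sums; closure under
   multiplication by arbitrary elements is automatic in a commutative ring). *)
Definition is_local : Prop :=
  forall x y : A, maxideal x -> maxideal y -> maxideal (x + y).

Fixpoint idpow (I : A -> Prop) (n : nat) : A -> Prop :=
  match n with
  | 0 => fun _ => True
  | n'.+1 => fun x => exists s : seq (A * A),
      (forall p, p \in s -> I p.1 /\ idpow I n' p.2) /\
      x = \sum_(p <- s) p.1 * p.2
  end.

Definition mpow (n : nat) : A -> Prop := idpow maxideal n.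

Definition madic_complete : Prop :=
  (forall x : A, (forall n, mpow n x) -> x = 0) /\
  (forall u : nat -> A, (forall n, mpow n (u n.+1 - u n)) ->
     exists a : A, forall n, mpow n (a - u n)).

Definition cotangent_findim : Prop :=
  exists (d : nat) (e : 'I_d -> A), (forall i, maxideal (e i)) /\
    forall x, maxideal x -> exists c : 'I_d -> k,
      mpow 2 (x - \sum_(i < d) c i *: e i).

Definition complete_local_fd : Prop :=
  is_local /\ madic_complete /\ cotangent_findim.

(* lam is an eigenvalue of the map induced by phi on m/m^2:
   some class [x] <> 0 (x in m, x notin m^2) with phi [x] = lam [x] *)
Definition cot_eigenvalue (phi : A -> A) (lam : k) : Prop :=
  exists x : A, maxideal x /\ ~ mpow 2 x /\ mpow 2 (phi x - lam *: x).

End LocalAlg.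

(* Main.v *)
Require Import Defs.
From HB Require Import structures.
From mathcomp Require Import all_boot all_order all_algebra all_field.
From mathcomp Require Import ring.
From Stdlib Require Import Classical IndefiniteDescription.
Set Implicit Arguments. Unset Strict Implicit. Unset Printing Implicit Defensive.
Import Order.TTheory GRing.Theory Num.Theory.
Local Open Scope ring_scope.

Section Basics.
Variables (k : fieldType) (A : comAlgType k).
Hypothesis Aloc : is_local A.

Lemma mi_mull (x y : A) : maxideal x -> maxideal (x * y).
Proof. move=> hx [z hz]; apply: hx; exists (y * z); by rewrite mulrA. Qed.

Lemma mi_mulr (x y : A) : maxideal y -> maxideal (x * y).
Proof. by rewrite mulrC; apply: mi_mull. Qed.

Lemma mi0 : maxideal (0 : A).
Proof. move=> [z]; rewrite mul0r => /eqP; by rewrite eq_sym oner_eq0. Qed.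

Lemma miD (x y : A) : maxideal x -> maxideal y -> maxideal (x + y).
Proof. exact: Aloc. Qed.

Lemma miZ (c : k) (x : A) : maxideal x -> maxideal (c *: x).
Proof. by move=> hx; rewrite -mulr_algl; apply: mi_mulr. Qed.

Lemma miN (x : A) : maxideal x -> maxideal (- x).
Proof. by move=> hx; rewrite -scaleN1r; apply: miZ. Qed.

Lemma miB (x y : A) : maxideal x -> maxideal y -> maxideal (x - y).
Proof. by move=> hx hy; apply: miD => //; apply: miN. Qed.

Lemma mi_sum (I : Type) (r : seq I) (P : pred I) (F : I -> A) :
  (forall i, P i -> maxideal (F i)) -> maxideal (\sum_(i <- r | P i) F i).
Proof. move=> h; apply: (big_ind (fun x => maxideal x)); [exact: mi0|exact: miD|exact: h]. Qed.

Lemma mpow0 n : mpow n (0 : A).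
Proof. by case: n => //= n; exists [::]; rewrite big_nil. Qed.

Lemma mpowD n (x y : A) : mpow n x -> mpow n y -> mpow n (x + y).
Proof.
case: n => //= n [s [hs ->]] [t [ht ->]]; exists (s ++ t); split.
  by move=> p; rewrite mem_cat => /orP[/hs|/ht].
by rewrite big_cat.
Qed.

Lemma mpow_mulr n (x y : A) : mpow n x -> mpow n (x * y).
Proof.
elim: n x y => // n IH x y /= [s [hs ->]].
exists [seq (p.1, p.2 * y) | p <- s]; split.
  move=> p /mapP [q qs ->] /=; have [h1 h2] := hs q qs; split => //; exact: IH.
by rewrite big_map mulr_suml; apply: eq_bigr => p _ /=; rewrite mulrA.
Qed.

Lemma mpow_mull n (x y : A) : mpow n y -> mpow n (x * y).
Proof. by rewrite mulrC; apply: mpow_mulr. Qed.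

Lemma mpowZ n (c : k) (x : A) : mpow n x -> mpow n (c *: x).
Proof. by move=> hx; rewrite -mulr_algl; apply: mpow_mull. Qed.

Lemma mpowN n (x : A) : mpow n x -> mpow n (- x).
Proof. by move=> hx; rewrite -scaleN1r; apply: mpowZ. Qed.

Lemma mpowB n (x y : A) : mpow n x -> mpow n y -> mpow n (x - y).
Proof. by move=> hx hy; apply: mpowD => //; apply: mpowN. Qed.

Lemma mpowBr n (x y : A) : mpow n (x - y) -> mpow n (y - x).
Proof. by move=> h; rewrite -opprB; apply: mpowN. Qed.

Lemma mpow_sum n (I : Type) (r : seq I) (P : pred I) (F : I -> A) :
  (forall i, P i -> mpow n (F i)) -> mpow n (\sum_(i <- r | P i) F i).
Proof. move=> h; apply: (big_ind (fun x => mpow n x)); [exact: mpow0|exact: mpowD|exact: h]. Qed.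

Lemma mpow1 (x : A) : mpow 1 x <-> maxideal x.
Proof.
split.
  move=> [s [hs ->]]; rewrite big_seq; apply: mi_sum => p ps.
  by have [h _] := hs p ps; apply: mi_mull.
move=> hx; exists [:: (x, 1)]; split.
  by move=> p; rewrite inE => /eqP -> /=.
by rewrite big_seq1 mulr1.
Qed.

Lemma mpow_mul i j (x y : A) : mpow i x -> mpow j y -> mpow (i + j) (x * y).
Proof.
elim: i x => [|i IH] x /=; first by move=> _ hy; apply: mpow_mull.
move=> [s [hs ->]] hy; exists [seq (p.1, p.2 * y) | p <- s]; split.
  move=> p /mapP [q qs ->] /=; have [h1 h2] := hs q qs; split => //; exact: IH.
by rewrite big_map mulr_suml; apply: eq_bigr => p _ /=; rewrite mulrA.
Qed.

Lemma mpowS n (x : A) : mpow n.+1 x -> mpow n x.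
Proof.
elim: n x => // n IH x /= [s [hs ->]]; exists s; split => //.
by move=> p ps; have [h1 h2] := hs p ps; split => //; apply: IH.
Qed.

Lemma mpow_le m n (x : A) : (m <= n)%N -> mpow n x -> mpow m x.
Proof.
move=> /subnK <-; elim: (n - m)%N => // i IH h; apply: IH; exact: mpowS.
Qed.

Lemma mpow_mi n (x : A) : (0 < n)%N -> mpow n x -> maxideal x.
Proof. by move=> hn h; apply/mpow1; apply: mpow_le h. Qed.


End Basics.


Section Phi.
Variables (k : fieldType) (A : comAlgType k).
Hypothesis Aloc : is_local A.
Variable phi : {lrmorphism A -> A}.
Hypothesis phi_bij : bijective phi.

Lemma phiL (a : k) (x y : A) : phi (a *: x + y) = a *: phi x + phi y.
Proof. by rewrite linearD linearZ. Qed.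

Lemma phi_mi (x : A) : maxideal x -> maxideal (phi x).
Proof.
move=> hx [y hy]; apply: hx; case: phi_bij => g gK Kg.
exists (g y); apply: (bij_inj phi_bij); have e : phi (g y) = y by exact: Kg.
rewrite rmorphM rmorph1 -hy; congr (_ * _); exact: e.
Qed.

Lemma phi_mpow n (x : A) : mpow n x -> mpow n (phi x).
Proof.
elim: n x => // n IH x /= [s [hs ->]].
exists [seq (phi p.1, phi p.2) | p <- s]; split.
  move=> p /mapP [q qs ->] /=; have [h1 h2] := hs q qs; split.
    exact: phi_mi. exact: IH.
by rewrite big_map rmorph_sum; apply: eq_bigr => p _; rewrite rmorphM.
Qed.

Lemma iterL i (a : k) (x y : A) :
  iter i phi (a *: x + y) = a *: iter i phi x + iter i phi y.
Proof. by elim: i => //= i ->; rewrite phiL. Qed.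

Lemma iter0 i : iter i phi 0 = 0 :> A.
Proof. by elim: i => //= i ->; rewrite raddf0. Qed.

Lemma iter_phi i (x : A) : iter i phi (phi x) = phi (iter i phi x).
Proof. by rewrite -iterS iterSr. Qed.

Lemma iter_mpow i n (x : A) : mpow n x -> mpow n (iter i phi x).
Proof. by elim: i => //= i IH h; apply: phi_mpow; apply: IH. Qed.

Definition pev (p : {poly k}) (x : A) : A :=
  \sum_(i < size p) p`_i *: iter i phi x.

Lemma pev_widen N (p : {poly k}) (x : A) : (size p <= N)%N ->
  pev p x = \sum_(i < N) p`_i *: iter i phi x.
Proof.
move=> hN; rewrite /pev (big_ord_widen N (fun i => p`_i *: iter i phi x) hN).
rewrite big_mkcond; apply: eq_bigr => i _; case: ifP => // /negbT.
by rewrite -leqNgt => h; rewrite nth_default // scale0r.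
Qed.

Lemma pevL (p : {poly k}) (a : k) (x y : A) : pev p (a *: x + y) = a *: pev p x + pev p y.
Proof.
rewrite /pev scaler_sumr -big_split; apply: eq_bigr => i _.
by rewrite iterL scalerDr !scalerA mulrC.
Qed.

Lemma pev0x (p : {poly k}) : pev p 0 = 0.
Proof. by rewrite /pev big1 // => i _; rewrite iter0 scaler0. Qed.

Lemma pevD (p : {poly k}) (x y : A) : pev p (x + y) = pev p x + pev p y.
Proof. by have := pevL p 1 x y; rewrite !scale1r. Qed.

Lemma pevZ (p : {poly k}) (a : k) (x : A) : pev p (a *: x) = a *: pev p x.
Proof. by rewrite -[a *: x]addr0 pevL pev0x addr0. Qed.

Lemma pevN (p : {poly k}) (x : A) : pev p (- x) = - pev p x.
Proof. by rewrite -scaleN1r pevZ scaleN1r. Qed.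

Lemma pevB (p : {poly k}) (x y : A) : pev p (x - y) = pev p x - pev p y.
Proof. by rewrite pevD pevN. Qed.

Lemma pev_sum (p : {poly k}) (I : Type) (r : seq I) (P : pred I) (F : I -> A) :
  pev p (\sum_(i <- r | P i) F i) = \sum_(i <- r | P i) pev p (F i).
Proof.
elim/big_rec2: _ => [|i y1 y2 _ <-]; first exact: pev0x.
exact: pevD.
Qed.

Lemma pev_phi (p : {poly k}) (x : A) : pev p (phi x) = phi (pev p x).
Proof.
rewrite /pev linear_sum; apply: eq_bigr => i _; by rewrite iter_phi linearZ.
Qed.

Lemma pev_iter (p : {poly k}) i (x : A) : pev p (iter i phi x) = iter i phi (pev p x).
Proof. by elim: i => //= i <-; rewrite pev_phi. Qed.

Lemma pev_mpow (p : {poly k}) n (x : A) : mpow n x -> mpow n (pev p x).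
Proof.
move=> hx; apply: mpow_sum => i _; apply: mpowZ; exact: iter_mpow.
Qed.

Lemma pevDp (p q : {poly k}) (x : A) : pev (p + q) x = pev p x + pev q x.
Proof.
set N := maxn (size p) (size q).
have hp : (size p <= N)%N by rewrite leq_maxl.
have hq : (size q <= N)%N by rewrite leq_maxr.
have hpq : (size (p + q)%R <= N)%N by apply: (@leq_trans _ _ _ (size_polyD _ _)); rewrite geq_max hp hq.
rewrite (pev_widen _ hp) (pev_widen _ hq) (pev_widen _ hpq) -big_split.
by apply: eq_bigr => i _; rewrite coefD scalerDl.
Qed.

Lemma pevC (c : k) (x : A) : pev c%:P x = c *: x.
Proof.
rewrite (@pev_widen 1); last by rewrite size_polyC leq_b1.
by rewrite big_ord1 coefC /=.
Qed.

Lemma pev0p (x : A) : pev 0 x = 0.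
Proof. by rewrite /pev size_poly0 big_ord0. Qed.

Lemma pevCM (c : k) (q : {poly k}) (x : A) : pev (c%:P * q) x = c *: pev q x.
Proof.
have h : (size (c%:P * q)%R <= size q)%N.
  apply: (@leq_trans _ _ _ (size_polyMleq _ _)); rewrite size_polyC; case: (c != 0) => /=; by rewrite ?add0n ?add1n ?leq_pred.
rewrite (pev_widen _ h) /pev scaler_sumr; apply: eq_bigr => i _.
by rewrite coefCM scalerA.
Qed.

Lemma pevMX (p : {poly k}) (x : A) : pev (p * 'X) x = phi (pev p x).
Proof.
have h : (size (p * 'X)%R <= (size p).+1)%N.
  apply: (@leq_trans _ _ _ (size_polyMleq _ _)); by rewrite size_polyX addn2.
rewrite (pev_widen _ h) big_ord_recl coefMX eqxx scale0r add0r.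
rewrite /pev linear_sum; apply: eq_bigr => i _.
by rewrite coefMX /= linearZ.
Qed.

Lemma pevM (p q : {poly k}) (x : A) : pev (p * q) x = pev p (pev q x).
Proof.
elim/poly_ind: p => [|p c IH]; first by rewrite mul0r !pev0p.
rewrite mulrDl mulrAC pevDp pevMX IH pevCM pevDp pevMX pevC.
done.
Qed.

Lemma pevX (x : A) : pev 'X x = phi x.
Proof. by rewrite -[X in pev X]mul1r pevMX -[1]/(1%:P) pevC scale1r. Qed.

Lemma pev1 (x : A) : pev 1 x = x.
Proof. by rewrite -[1]/(1%:P) pevC scale1r. Qed.

Lemma pevXsubC (c : k) (x : A) : pev ('X - c%:P) x = phi x - c *: x.
Proof.
by rewrite -polyCN pevDp pevX pevC scaleNr.
Qed.

Lemma pev_comm (p q : {poly k}) (x : A) : pev p (pev q x) = pev q (pev p x).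
Proof. by rewrite -!pevM mulrC. Qed.

End Phi.


Section Prod.
Variables (k : fieldType) (A : comAlgType k).
Hypothesis Aloc : is_local A.
Variable phi : {lrmorphism A -> A}.
Hypothesis phi_bij : bijective phi.

Definition pl (s : seq k) : {poly k} := \prod_(z <- s) ('X - z%:P).

Lemma pl_cat s1 s2 : pl (s1 ++ s2) = pl s1 * pl s2.
Proof. by rewrite /pl big_cat. Qed.

Lemma pl_nil : pl [::] = 1.
Proof. by rewrite /pl big_nil. Qed.

Lemma pev_pl_cons z s (x : A) :
  pev phi (pl (z :: s)) x = phi (pev phi (pl s) x) - z *: pev phi (pl s) x.
Proof. by rewrite /pl big_cons pevM pevXsubC. Qed.

Lemma pev_pl_cons' z s (x : A) :
  pev phi (pl (z :: s)) x = pev phi ('X - z%:P) (pev phi (pl s) x).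
Proof. by rewrite /pl big_cons pevM. Qed.

Lemma key_ident (al g : k) m (X a c pX pa pc : A) :
  pX - (al * g) *: X - al ^+ m.+1 *: (a * (pc - g *: c)) =
  ((pX - al ^+ m *: (pa * pc)) - (al * g) *: (X - al ^+ m *: (a * c)))
  + al ^+ m *: ((pa - al *: a) * pc).
Proof.
have h (b gg bm : A) : pX - b*(gg*X) - bm*(b*(a*(pc - gg*c))) = ((pX - bm*(pa*pc)) - b*(gg*(X - bm*(a*c)))) + bm*((pa - b*a)*pc).
  ring.
rewrite exprSr -!scalerA. have := h (al%:A) (g%:A) ((al ^+ m)%:A); rewrite !mulr_algl. by [].
Qed.


Lemma phiBZM (X a c : A) (al : k) :
  phi (X - al *: (a * c)) = phi X - al *: (phi a * phi c).
Proof.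
have e : phi (a * c) = phi a * phi c by apply: rmorphM.
transitivity (phi ((- al) *: (a * c) + X)); first by rewrite addrC scaleNr.
by rewrite phiL e scaleNr addrC.
Qed.

Lemma prod_kill j (al bl : seq k) (a b : A) :
  maxideal a -> mpow 2 (pev phi (pl al) a) ->
  mpow j b -> mpow j.+1 (pev phi (pl bl) b) ->
  mpow j.+2 (pev phi (pl [seq x * y | x <- al, y <- bl]) (a * b)).
Proof.
elim: al a b => [|al0 al IH] a b ha hpa hb hpb.
  rewrite /= pl_nil pev1; rewrite pl_nil pev1 in hpa.
  by rewrite -add2n; apply: mpow_mul.
set a' := phi a - al0 *: a.
have ha' : maxideal a' by apply: miB => //; [apply: (phi_mi phi_bij) | apply: miZ].
have hpa' : mpow 2 (pev phi (pl al) a').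
  by rewrite /a' -pevXsubC pev_comm -pev_pl_cons'.
set R' := pl [seq x * y | x <- al, y <- bl].
pose J z := mpow j.+2 (pev phi R' z).
have JD u v : J u -> J v -> J (u + v) by rewrite /J pevD; apply: mpowD.
have JZ c u : J u -> J (c *: u) by rewrite /J pevZ; apply: mpowZ.
have JB u v : J u -> J v -> J (u - v) by rewrite /J pevB; apply: mpowB.
have Jphi u : J u -> J (phi u) by rewrite /J pev_phi; apply: (phi_mpow phi_bij).
have IH' c : mpow j c -> mpow j.+1 (pev phi (pl bl) c) -> J (a' * c).
  by move=> hc hpc; apply: IH.
have sub (gs : seq k) c : mpow j c -> mpow j.+1 (pev phi (pl bl) c) ->
    J (pev phi (pl [seq al0 * y | y <- gs]) (a * c)
       - al0 ^+ (size gs) *: (a * pev phi (pl gs) c)).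
  elim: gs => [|g gs IHg] hc hpc.
    rewrite /= !pl_nil !pev1 expr0 scale1r subrr /J pev0x; exact: mpow0.
  rewrite /= !pev_pl_cons.
  set X := pev phi (pl [seq al0 * y | y <- gs]) (a * c).
  set c1 := pev phi (pl gs) c.
  rewrite (key_ident _ _ _ _ _ _ (phi X) (phi a) (phi c1)).
  apply: JD; last first.
    apply: JZ; apply: IH'.
      by apply: (phi_mpow phi_bij); apply: (pev_mpow phi_bij).
    by rewrite pev_phi /c1 (pev_comm phi (pl bl)); apply: (phi_mpow phi_bij); apply: (pev_mpow phi_bij).
  rewrite -phiBZM; apply: JB; [apply: Jphi | apply: JZ]; exact: IHg.
have hJ := sub bl b hb hpb.
have -> : [seq x * y | x <- al0 :: al, y <- bl] =
  [seq al0 * y | y <- bl] ++ [seq x * y | x <- al, y <- bl] by [].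
rewrite pl_cat pevM pev_comm -/R'.
set Y := pev phi (pl [seq al0 * y | y <- bl]) (a * b).
rewrite -(subrK (al0 ^+ size bl *: (a * pev phi (pl bl) b)) Y).
apply: JD => //; apply: JZ; rewrite /J; apply: (pev_mpow phi_bij).
by rewrite -add1n; apply: mpow_mul => //; apply/mpow1.
Qed.

End Prod.


Fixpoint Rl (k : fieldType) (rs : seq k) j : seq k :=
  match j with 0 => rs | j'.+1 => [seq x * y | x <- rs, y <- Rl rs j'] end.

Fixpoint Qs (k : fieldType) (rs : seq k) J : seq k :=
  match J with 0 => [::] | J'.+1 => Qs rs J' ++ Rl rs J' end.

Lemma Rl_prod (k : fieldType) (rs : seq k) j z : z \in Rl rs j ->
  exists ls : seq k, size ls = j.+1 /\ (forall l, l \in ls -> l \in rs) /\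
    z = \prod_(l <- ls) l.
Proof.
elim: j z => [|j IH] z /=.
  move=> zr; exists [:: z]; split => //; split; last by rewrite big_seq1.
  by move=> l; rewrite inE => /eqP ->.
case/allpairsP => [[x y]] /= [xr yr ->].
have [ls [hs [hl hp]]] := IH y yr.
exists (x :: ls); split; first by rewrite /= hs.
split; last by rewrite big_cons hp.
by move=> l; rewrite inE => /orP [/eqP ->|/hl].
Qed.

Section Levels.
Variables (k : fieldType) (A : comAlgType k).
Hypothesis Aloc : is_local A.
Variable phi : {lrmorphism A -> A}.
Hypothesis phi_bij : bijective phi.
Variable rs : seq k.
Hypothesis H1 : forall x : A, maxideal x -> mpow 2 (pev phi (pl rs) x).

Lemma level_kill j (x : A) : mpow j.+1 x -> mpow j.+2 (pev phi (pl (Rl rs j)) x).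
Proof.
elim: j x => [|j IH] x.
  by move=> /(mpow1 Aloc) hx; apply: H1.
move=> [s [hs ->]]; rewrite pev_sum big_seq; apply: mpow_sum => p ps.
have [h1 h2] := hs p ps.
apply: (prod_kill Aloc phi_bij) => //; first exact: H1.
exact: IH.
Qed.

Lemma Qs_kill J (x : A) : maxideal x -> mpow J.+1 (pev phi (pl (Qs rs J)) x).
Proof.
move=> hx; elim: J => [|J IH] /=.
  by rewrite pl_nil pev1; apply/(mpow1 Aloc).
rewrite pl_cat pevM pev_comm; exact: level_kill.
Qed.

End Levels.


Section MinBasis.
Variables (k : fieldType) (A : lmodType k).
Variables (N T : A -> Prop).
Hypotheses (N0 : N 0) (ND : forall x y, N x -> N y -> N (x + y))
  (NZ : forall (c : k) x, N x -> N (c *: x)).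

Lemma zmod_id (x ael SA rSC : A) :
  x - (SA - rSC) = (x - (ael + SA)) + (ael + rSC).
Proof. rewrite opprB opprD -!addrA; congr (_ + _); by rewrite [RHS]addrCA addKr addrC. Qed.

Lemma min_basis D (e : 'I_D -> A) : (forall i, T (e i)) ->
  (forall x, T x -> exists c : 'I_D -> k, N (x - \sum_i c i *: e i)) ->
  exists d (b : 'I_d -> A), (forall i, T (b i)) /\
    (forall x, T x -> exists c : 'I_d -> k, N (x - \sum_i c i *: b i)) /\
    (forall c : 'I_d -> k, N (\sum_i c i *: b i) -> forall i, c i = 0).
Proof.
elim: D e => [|D IH] e hT hS.
  by exists 0%N, e; split => //; split => // c _ [].
destruct (classic (forall c : 'I_D.+1 -> k, N (\sum_i c i *: e i) -> forall i, c i = 0)) as [h|h].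
  by exists D.+1, e.
have [c [hc [l hl]]] : exists c : 'I_D.+1 -> k, N (\sum_i c i *: e i) /\ exists l, c l <> 0.
  apply: NNPP => hn; apply: h => c hc i; apply: NNPP => hci; apply: hn.
  by exists c; split => //; exists i.
apply: (IH (fun j => e (lift l j))) => [j|x hx]; first exact: hT.
have [a ha] := hS x hx.
set r := a l / c l.
exists (fun j => a (lift l j) - r * c (lift l j)).
have -> : x - \sum_i (a (lift l i) - r * c (lift l i)) *: e (lift l i) =
   (x - \sum_i a i *: e i) + r *: \sum_i c i *: e i.
  rewrite (bigD1_ord l) //= [in X in _ = _ + r *: X](bigD1_ord l) //=.
  rewrite scalerDr scalerA /r mulfVK; last by apply/eqP.
  under eq_bigr do rewrite scalerBl -scalerA.
  by rewrite sumrB -scaler_sumr; exact: zmod_id.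
by apply: ND => //; apply: NZ.
Qed.

End MinBasis.


Section Lim.
Variables (k : fieldType) (A : comAlgType k).
Hypothesis Aloc : is_local A.
Hypothesis Acomp : madic_complete A.
Variable phi : {lrmorphism A -> A}.
Hypothesis phi_bij : bijective phi.

Lemma bezout_split (p q : {poly k}) (x : A) : coprimep p q ->
  exists u v : {poly k}, x = pev phi u (pev phi p x) + pev phi v (pev phi q x).
Proof.
move=> /Bezout_eq1_coprimepP [[u v] /= e]; exists u, v.
by rewrite -!pevM -pevDp e pev1.
Qed.

Variable psi : {poly k}.
Variable n : nat.
Hypothesis HG : forall j, (n <= j)%N -> exists P : {poly k}, coprimep psi P /\
  forall x : A, mpow j x -> mpow j.+1 (pev phi P x).

Lemma surj_step j (t : A) : (n <= j)%N -> mpow j t ->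
  exists z, mpow j z /\ mpow j.+1 (pev phi psi z - t).
Proof.
move=> hj ht; have [P [cP hP]] := HG hj.
move/Bezout_eq1_coprimepP: cP => [[u v] /= e].
exists (pev phi u t); split; first exact: (pev_mpow phi_bij).
have -> : pev phi psi (pev phi u t) - t = - pev phi v (pev phi P t).
  have ht' : t = pev phi u (pev phi psi t) + pev phi v (pev phi P t).
    by rewrite -!pevM -pevDp e pev1.
  by rewrite pev_comm {2}ht' opprD addrA subrr add0r.
by apply: mpowN; apply: (pev_mpow phi_bij); apply: hP.
Qed.

Lemma inj_step j (z : A) : (n <= j)%N -> mpow j z -> mpow j.+1 (pev phi psi z) ->
  mpow j.+1 z.
Proof.
move=> hj hz hpz; have [P [cP hP]] := HG hj.
move/Bezout_eq1_coprimepP: cP => [[u v] /= e].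
rewrite -[z](pev1 phi) -e pevDp !pevM.
apply: mpowD; apply: (pev_mpow phi_bij) => //; exact: hP.
Qed.

Lemma psi_inj (z : A) : mpow n z -> pev phi psi z = 0 -> z = 0.
Proof.
move=> hz h0; case: Acomp => sep _; apply: sep => N.
have hj : forall i, mpow (i + n) z.
  elim=> [|i IH] //; apply: (inj_step (j := i + n)) => //; first by rewrite leq_addl.
  by rewrite h0; apply: mpow0.
by apply: (mpow_le (n := N + n)); [rewrite leq_addr | exact: hj].
Qed.

Lemma psi_surj (t : A) : mpow n t -> exists s, mpow n s /\ pev phi psi s = t.
Proof.
move=> ht.
have : forall p : nat * A, exists z : A, (n <= p.1)%N -> mpow p.1 p.2 ->
    mpow p.1 z /\ mpow p.1.+1 (pev phi psi z - p.2).
  move=> [j y] /=; destruct (classic ((n <= j)%N /\ mpow j y)) as [[h1 h2]|h].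
    by have [z hz] := surj_step h1 h2; exists z.
  by exists 0 => h1 h2; case: h.
move=> /functional_choice [F hF].
pose fix s (N : nat) : A := if N is N'.+1 then
  s N' + F ((N' + n)%N, t - pev phi psi (s N')) else 0.
have inv : forall N, mpow n (s N) /\ mpow (N + n) (t - pev phi psi (s N)).
  elim=> [|N [IH1 IH2]] /=; first by rewrite pev0x subr0; split => //; apply: mpow0.
  have [h1 h2] := hF ((N + n)%N, t - pev phi psi (s N)) (leq_addl _ _) IH2.
  split; first by apply: mpowD => //; apply: (mpow_le (n := N + n)) => //; rewrite leq_addl.
  set z := F _.
  have -> : t - pev phi psi (s N + z) = - (pev phi psi z - (t - pev phi psi (s N))).
    by rewrite pevD opprD addrA [RHS]opprB.
  by rewrite addSn; apply: mpowN.
have cauchy : forall N, mpow N (s N.+1 - s N).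
  move=> N /=; rewrite addrC addKr.
  have [h1 _] := hF ((N + n)%N, t - pev phi psi (s N)) (leq_addl _ _) (proj2 (inv N)).
  by apply: (mpow_le (n := N + n)) => //; rewrite leq_addr.
case: Acomp => sep /(_ s cauchy) [a ha].
exists a; split.
  by rewrite -(subrK (s n) a); apply: mpowD => //; exact: (proj1 (inv n)).
apply/eqP; rewrite eq_sym -subr_eq0; apply/eqP.
apply: sep => N.
have -> : t - pev phi psi a = (t - pev phi psi (s N)) - pev phi psi (a - s N).
  by rewrite pevB opprB addrA subrK.
apply: mpowB; first by apply: (mpow_le (n := N + n)); [rewrite leq_addr | exact: (proj2 (inv N))].
by apply: (pev_mpow phi_bij).
Qed.

End Lim.


Section Cot.
Variables (k : closedFieldType) (A : comAlgType k).
Hypothesis Aloc : is_local A.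
Variable phi : {lrmorphism A -> A}.
Hypothesis phi_bij : bijective phi.
Variable d' : nat.
Local Notation d := d'.+1.
Variable e : 'I_d -> A.
Hypothesis heT : forall i, maxideal (e i).
Hypothesis heS : forall x : A, maxideal x -> exists c : 'I_d -> k, mpow 2 (x - \sum_i c i *: e i).
Hypothesis heI : forall c : 'I_d -> k, mpow 2 (\sum_i c i *: e i) -> forall i, c i = 0.

Definition emb (v : 'rV[k]_d) : A := \sum_i v 0 i *: e i.

Lemma embL (a : k) u v : emb (a *: u + v) = a *: emb u + emb v.
Proof.
rewrite /emb scaler_sumr -big_split; apply: eq_bigr => i _.
by rewrite !mxE scalerDl scalerA.
Qed.

Lemma emb_mi v : maxideal (emb v).
Proof. by apply: (mi_sum Aloc) => i _; apply: miZ. Qed.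

Lemma exists_M : exists M : 'M[k]_d, forall v, mpow 2 (phi (emb v) - emb (v *m M)).
Proof.
have : forall i, exists c : 'I_d -> k, mpow 2 (phi (e i) - \sum_j c j *: e j).
  by move=> i; apply: heS; apply: (phi_mi phi_bij).
case/fin_all_exists => C hC.
exists (\matrix_(i, j) C i j) => v.
have -> : phi (emb v) - emb (v *m \matrix_(i, j) C i j) =
    \sum_i v 0 i *: (phi (e i) - \sum_j C i j *: e j).
  rewrite /emb linear_sum /=.
  under [in RHS]eq_bigr do rewrite scalerBr.
  rewrite sumrB; congr (_ - _).
    by apply: eq_bigr => i _; rewrite linearZ.
  under eq_bigr do rewrite mxE scaler_suml.
  rewrite exchange_big /=; apply: eq_bigr => i _.
  rewrite scaler_sumr; apply: eq_bigr => j _.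
  by rewrite mxE scalerA.
apply: mpow_sum => i _; apply: mpowZ; exact: hC.
Qed.

Lemma emb0 : emb 0 = 0.
Proof. by rewrite /emb big1 // => i _; rewrite mxE scale0r. Qed.

Lemma embD u v : emb (u + v) = emb u + emb v.
Proof. by have := embL 1 u v; rewrite !scale1r. Qed.

Lemma embZ (a : k) v : emb (a *: v) = a *: emb v.
Proof. by rewrite -[a *: v]addr0 embL emb0 addr0. Qed.

Variable M : 'M[k]_d.
Hypothesis hM : forall v, mpow 2 (phi (emb v) - emb (v *m M)).

Lemma pev_emb p v : mpow 2 (pev phi p (emb v) - emb (v *m horner_mx M p)).
Proof.
elim/poly_ind: p => [|p c IH].
  by rewrite pev0p rmorph0 mulmx0 emb0 subrr; apply: mpow0.
rewrite pevDp pevMX pevC rmorphD rmorphM /= horner_mx_X horner_mx_C.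
rewrite -mulmxE mulmxDr mulmxA mul_mx_scalar embD embZ.
set P := pev phi p (emb v); set H := horner_mx M p.
have -> : phi P + c *: emb v - (emb (v *m H *m M) + c *: emb v) =
    phi (P - emb (v *m H)) + (phi (emb (v *m H)) - emb (v *m H *m M)).
  by rewrite raddfB addrA subrK [emb _ + _]addrC addrKA.
apply: mpowD; [exact: (phi_mpow phi_bij) | exact: hM].
Qed.

Lemma exists_rs : exists rs : seq k,
  (forall x : A, maxideal x -> mpow 2 (pev phi (pl rs) x)) /\ (forall z, z \in rs -> cot_eigenvalue phi z).
Proof.
have [rs hrs] := closed_field_poly_normal (char_poly M).
rewrite (monicP (char_poly_monic M)) scale1r -/(pl rs) in hrs.
exists rs; split.
  move=> x hx; have [c hc] := heS hx.
  have ev : emb (\row_i c i) = \sum_i c i *: e i.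
    by rewrite /emb; apply: eq_bigr => i _; rewrite mxE.
  rewrite -(subrK (emb (\row_i c i)) x) pevD; apply: mpowD.
    by apply: (pev_mpow phi_bij); rewrite ev.
  have := pev_emb (pl rs) (\row_i c i).
  by rewrite -hrs Cayley_Hamilton mulmx0 emb0 subr0.
move=> z zr.
have : eigenvalue M z by rewrite eigenvalue_root_char hrs root_prod_XsubC.
case/eigenvalueP => v hv vn0.
exists (emb v); split; first exact: emb_mi.
split.
  move=> h2; move/eqP: vn0; apply; apply/rowP => i.
  by rewrite mxE (heI h2) ?ord1.
by have := hM v; rewrite hv embZ.
Qed.

End Cot.


Lemma coprime_pl (k : fieldType) (s1 s2 : seq k) :
  (forall z, z \in s2 -> z \notin s1) -> coprimep (pl s1) (pl s2).
Proof.
elim: s2 => [|z s2 IH] h; first by rewrite pl_nil coprimep1.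
rewrite /pl big_cons coprimepMr -/(pl s1) -/(pl s2) coprimep_XsubC root_prod_XsubC.
rewrite h ?mem_head //= IH // => y ys; apply: h; by rewrite inE ys orbT.
Qed.

Section Core.
Variables (k : fieldType) (A : comAlgType k).
Hypothesis Aloc : is_local A.
Hypothesis Acomp : madic_complete A.
Variable phi : {lrmorphism A -> A}.
Hypothesis phi_bij : bijective phi.
Variable rs : seq k.
Hypothesis H1 : forall x : A, maxideal x -> mpow 2 (pev phi (pl rs) x).
Variable n : nat.
Hypothesis n2 : (2 <= n)%N.
Hypothesis notin : forall j z, (n <= j.+1)%N -> z \in Rl rs j -> z \notin rs.

Definition Qv := Qs rs n.-1.
Definition psi := pl (rs ++ [seq z <- Qv | z \in rs]).
Definition rho := pl [seq z <- Qv | z \notin rs].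

Lemma psi_monic : psi \is monic.
Proof. exact: monic_prod_XsubC. Qed.

Lemma psi_rho (x : A) : maxideal x -> mpow n (pev phi (psi * rho) x).
Proof.
move=> hx.
have -> : psi * rho = pl rs * pl Qv.
  rewrite /psi /rho pl_cat -mulrA; congr (_ * _).
  by rewrite /pl !big_filter [RHS](bigID (fun z => z \in rs)) /=.
rewrite pevM; apply: (pev_mpow phi_bij).
have := Qs_kill Aloc phi_bij H1 n.-1 hx.
by rewrite prednK // (leq_trans _ n2).
Qed.

Lemma psi_2 (x : A) : maxideal x -> mpow 2 (pev phi psi x).
Proof.
move=> hx; rewrite /psi pl_cat mulrC pevM; apply: (pev_mpow phi_bij); exact: H1.
Qed.

Lemma coprime_psi_rho : coprimep psi rho.
Proof.
apply: coprime_pl => z; rewrite mem_filter => /andP [zn _].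
by rewrite mem_cat mem_filter negb_or (negbTE zn).
Qed.

Lemma HG j : (n <= j)%N -> exists P : {poly k}, coprimep psi P /\
  forall x : A, mpow j x -> mpow j.+1 (pev phi P x).
Proof.
case: j => [|j] hj; first by move: (leq_trans n2 hj).
exists (pl (Rl rs j)); split; last by move=> x; apply: (level_kill Aloc phi_bij H1).
apply: coprime_pl => z zr.
have zn := notin hj zr.
by rewrite mem_cat mem_filter negb_or (negbTE zn).
Qed.

Lemma lift_w (x : A) : maxideal x ->
  exists w, maxideal w /\ pev phi psi w = 0 /\ mpow 2 (x - w).
Proof.
move=> hx.
have [u [v ex]] := bezout_split phi x coprime_psi_rho.
set y := pev phi v (pev phi rho x).
have hy : mpow n (pev phi psi y).
  rewrite /y (pev_comm phi psi v) -(pevM _ psi rho); apply: (pev_mpow phi_bij).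
  exact: psi_rho.
have [s [hs hps]] := psi_surj Acomp phi_bij HG hy.
exists (y - s); split; last split.
- apply: (miB Aloc); last exact: (mpow_mi Aloc (n := n)) (leq_trans _ n2) hs.
  apply/(mpow1 Aloc); apply: (pev_mpow phi_bij); apply: (pev_mpow phi_bij).
  exact/(mpow1 Aloc).
- by rewrite pevB hps subrr.
- have -> : x - (y - s) = pev phi u (pev phi psi x) + s.
    by rewrite {1}ex -/y opprB addrA addrAC addrK.
  apply: mpowD; first by apply: (pev_mpow phi_bij); apply: psi_2.
  exact: (mpow_le (n := n)).
Qed.

End Core.


Section Fin.
Variables (k : fieldType) (A : comAlgType k).
Hypothesis Aloc : is_local A.
Variable phi : {lrmorphism A -> A}.
Hypothesis phi_bij : bijective phi.
Variable psi : {poly k}.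
Hypothesis psi_mon : psi \is monic.
Variable d : nat.
Variable w : 'I_d -> A.
Hypothesis hw : forall i, maxideal (w i) /\ pev phi psi (w i) = 0.

Local Notation K := (size psi).
Definition g (p : 'I_K * 'I_d) : A := iter p.1 phi (w p.2).
Definition T (x : A) : Prop := exists c : 'I_K * 'I_d -> k, x = \sum_p c p *: g p.

Lemma T0 : T 0.
Proof. by exists (fun _ => 0); rewrite big1 // => p _; rewrite scale0r. Qed.

Lemma TD x y : T x -> T y -> T (x + y).
Proof.
move=> [c ->] [c' ->]; exists (fun p => c p + c' p).
by rewrite -big_split; apply: eq_bigr => p _; rewrite scalerDl.
Qed.

Lemma TZ (a : k) x : T x -> T (a *: x).
Proof.
move=> [c ->]; exists (fun p => a * c p).
by rewrite scaler_sumr; apply: eq_bigr => p _; rewrite scalerA.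
Qed.

Lemma TN x : T x -> T (- x).
Proof. by move=> h; rewrite -scaleN1r; apply: TZ. Qed.

Lemma Tsum (I : Type) (r : seq I) (P : pred I) (F : I -> A) :
  (forall i, P i -> T (F i)) -> T (\sum_(i <- r | P i) F i).
Proof. move=> h; apply: (big_ind T); [exact: T0|exact: TD|exact: h]. Qed.

Lemma Tg p : T (g p).
Proof.
exists (fun q => (q == p)%:R); rewrite (bigD1 p) //= eqxx scale1r big1 ?addr0 //.
by move=> q /negbTE ->; rewrite scale0r.
Qed.

Lemma Te j i : (j < K)%N -> T (iter j phi (w i)).
Proof. by move=> hj; apply: (Tg (Ordinal hj, i)). Qed.

Lemma Kpos : K = (K.-1).+1.
Proof. by rewrite prednK // size_poly_gt0 monic_neq0. Qed.

Lemma iterK i : iter K.-1 phi (w i) =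
  - \sum_(j < K.-1) psi`_j *: iter j phi (w i).
Proof.
have h0 := (hw i).2.
rewrite (@pev_widen _ _ phi (K.-1).+1) in h0; last by rewrite -Kpos.
rewrite big_ord_recr /= -lead_coefE (monicP psi_mon) scale1r in h0.
by apply/eqP; rewrite -addr_eq0 addrC h0.
Qed.

Lemma T_phi_g p : T (phi (g p)).
Proof.
case: p => [[j hj] i]; rewrite /g /=.
have -> : phi (iter j phi (w i)) = iter j.+1 phi (w i) by [].
case: (ltnP j.+1 K) => h; first exact: Te.
have ej : j = K.-1.
  apply/eqP; rewrite eqn_leq -ltnS -Kpos hj /=.
  by rewrite -ltnS -Kpos.
rewrite ej /= iterK -sumrN linear_sum /=; apply: Tsum => l _.
rewrite -scaleNr linearZ /=; apply: TZ.
have -> : phi (iter l phi (w i)) = iter l.+1 phi (w i) by [].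
by apply: Te; rewrite {2}Kpos ltnS.
Qed.

Lemma T_phi x : T x -> T (phi x).
Proof.
move=> [c ->]; rewrite linear_sum; apply: Tsum => p _.
rewrite linearZ /=; apply: TZ; exact: T_phi_g.
Qed.

Lemma T_mi x : T x -> maxideal x.
Proof.
move=> [c ->]; apply: (mi_sum Aloc) => p _; apply: miZ.
apply/(mpow1 Aloc); apply: (iter_mpow phi_bij); apply/(mpow1 Aloc).
exact: (hw _).1.
Qed.

Lemma fin_result : exists r (phiV : 'M[k]_r) (f : 'rV[k]_r -> A),
    phiV \in unitmx /\
    (forall (a : k) (u v : 'rV[k]_r), f (a *: u + v) = a *: f u + f v) /\
    (forall v, maxideal (f v)) /\
    (forall v, f (v *m phiV) = phi (f v)) /\
    (forall c : 'I_d -> k, exists v, f v = \sum_i c i *: w i).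
Proof.
pose e (j : 'I_#|{: 'I_K * 'I_d}|) := g (enum_val j).
have [r [b [hbT [hbS hbI]]]] :
  exists r (b : 'I_r -> A), (forall i, T (b i)) /\
    (forall x, T x -> exists c : 'I_r -> k, x - \sum_i c i *: b i = 0) /\
    (forall c : 'I_r -> k, \sum_i c i *: b i = 0 -> forall i, c i = 0).
  have ND (x y : A) : x = 0 -> y = 0 -> x + y = 0 by move=> -> ->; rewrite addr0.
  have NZ (c : k) (x : A) : x = 0 -> c *: x = 0 by move=> ->; rewrite scaler0.
  apply: (@min_basis k A (fun x => x = 0) T ND NZ _ e).
    by move=> j; apply: Tg.
  move=> x [c ->]; exists (fun j => c (enum_val j)); apply/eqP; rewrite subr_eq0.
  by rewrite (reindex _ (onW_bij _ (enum_val_bij _))).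
have : forall i, exists c : 'I_r -> k, phi (b i) - \sum_j c j *: b j = 0.
  by move=> i; apply: hbS; apply: T_phi.
case/fin_all_exists => C hC.
have hC' i : phi (b i) = \sum_j C i j *: b j by apply/eqP; rewrite -subr_eq0 hC.
pose f (v : 'rV[k]_r) := \sum_i v 0 i *: b i.
have fL (a : k) u v : f (a *: u + v) = a *: f u + f v.
  rewrite /f scaler_sumr -big_split; apply: eq_bigr => i _.
  by rewrite !mxE scalerDl scalerA.
have fphi v : f (v *m \matrix_(i, j) C i j) = phi (f v).
  rewrite /f linear_sum /=.
  under eq_bigr do rewrite mxE scaler_suml.
  rewrite exchange_big /=; apply: eq_bigr => i _.
  rewrite linearZ /= hC' scaler_sumr; apply: eq_bigr => j _.
  by rewrite mxE scalerA.
exists r, (\matrix_(i, j) C i j), f; split; last split => //; last split.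
- rewrite unitmxE unitfE; apply/negP => /det0P [v vn0 hv].
  have hf : phi (f v) = 0.
    by rewrite -fphi hv /f big1 // => i _; rewrite mxE scale0r.
  have : f v = 0.
    apply: (bij_inj phi_bij); rewrite hf.
    by rewrite raddf0.
  move/(hbI (fun i => v 0 i)) => hv0; move/eqP: vn0; apply.
  by apply/rowP => i; rewrite mxE hv0 ?ord1.
- move=> v; apply: T_mi; apply: Tsum => i _; apply: TZ; exact: hbT.
split => // c.
have hT : T (\sum_i c i *: w i).
  apply: Tsum => i _; apply: TZ; apply: (Te (j := 0)).
  by rewrite Kpos.
have [a ha] := hbS _ hT.
exists (\row_i a i); apply/eqP; rewrite eq_sym -subr_eq0; apply/eqP.
rewrite /f (eq_bigr (fun i => a i *: b i)); first exact: ha.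
by move=> i _; rewrite mxE.
Qed.

End Fin.


Unset Implicit Arguments.

Theorem mainTheorem16 (k : closedFieldType) (A : comAlgType k)
  (hA : complete_local_fd A)
  (phi : {lrmorphism A -> A}) (phi_bij : bijective phi)
  (hres : exists n : nat, forall n' : nat, (n <= n')%N ->
     forall ls : seq k, size ls = n' ->
       (forall l, l \in ls -> cot_eigenvalue phi l) ->
       ~ cot_eigenvalue phi (\prod_(l <- ls) l)) :
  exists (d : nat) (phiV : 'M[k]_d) (f : 'rV[k]_d -> A),
    phiV \in unitmx /\
    (forall (a : k) (u v : 'rV[k]_d), f (a *: u + v) = a *: f u + f v) /\
    (forall v, maxideal (f v)) /\
    (forall v, f (v *m phiV) = phi (f v)) /\
    (forall x : A, maxideal x -> exists v, mpow 2 (x - f v)).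
Proof.
case: hA => Aloc [Acomp [d0 [e0 [he0 hs0]]]].
have ND (x y : A) : mpow 2 x -> mpow 2 y -> mpow 2 (x + y) by apply: mpowD.
have NZ (c : k) (x : A) : mpow 2 x -> mpow 2 (c *: x) by apply: mpowZ.
have [d [e [heT [heS heI]]]] :=
  @min_basis k A (mpow 2) (@maxideal k A) ND NZ d0 e0 he0 hs0.
case: d e heT heS heI => [|d'] e heT heS heI.
  exists 0%N, 1%:M, (fun _ => 0); split; first exact: unitmx1.
  split; first by move=> a u v; rewrite scaler0 addr0.
  split; first by move=> v; apply: mi0.
  split; first by move=> v; rewrite raddf0.
  move=> x hx; have [c hc] := heS x hx; exists 0.
  by move: hc; rewrite big_ord0.
have [M hM] := exists_M phi_bij heT heS.
have [rs [H1 hev]] := exists_rs Aloc phi_bij heT heS heI hM.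
case: hres => n0 hn0.
pose n := maxn n0 2.
have n2 : (2 <= n)%N by rewrite leq_maxr.
have notin j z : (n <= j.+1)%N -> z \in Rl rs j -> z \notin rs.
  move=> hj zr; apply/negP => zrs.
  have [ls [hs [hl hp]]] := Rl_prod zr.
  apply: (hn0 j.+1 _ ls hs).
  - by apply: leq_trans hj; rewrite leq_maxl.
  - by move=> l /hl; apply: hev.
  - by rewrite -hp; apply: hev.
have : forall i, exists w, maxideal w /\ pev phi (psi rs n) w = 0 /\ mpow 2 (e i - w).
  move=> i; exact: (lift_w Aloc Acomp phi_bij H1 n2 notin (heT i)).
case/fin_all_exists => w hw.
have hw' i : maxideal (w i) /\ pev phi (psi rs n) (w i) = 0.
  by have [h1 [h2 _]] := hw i.
have [r [phiV [f [hU [hL [hmi [hI hS]]]]]]] :=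
  fin_result Aloc phi_bij (psi_monic rs n) hw'.
exists r, phiV, f; split => //; split => //; split => //; split => //.
move=> x hx; have [c hc] := heS x hx.
have [v hv] := hS c; exists v; rewrite hv.
have -> : x - \sum_i c i *: w i =
    (x - \sum_i c i *: e i) + \sum_i c i *: (e i - w i).
  by rewrite (eq_bigr _ (fun i _ => scalerBr _ _ _)) sumrB addrA subrK.
apply: mpowD => //; apply: mpow_sum => i _; apply: mpowZ.
by have [_ [_ h]] := hw i.
Qed.
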